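(* Let $(P,\le,\mu,\gamma)$ be a preordered heap and let $\tau\colon P\times P\to P$ be its target multiplication, $\tau(a,b)=\gamma(\mu(\gamma a,\gamma b))$. Then for every $a\in P$: (i) $(\mu_a,\tau^{\gamma a})$ is an adjoint pair, i.e. for all $b,c\in P$: $\mu(a,b)\le c$ if and only if $b\le \tau(c,\gamma a)$; (ii) $(\mu^a,\tau_{\gamma a})$ is an adjoint pair, i.e. for all $b,c\in P$: $\mu(b,a)\le c$ if and only if $b\le \tau(\gamma a,c)$.
   Context: A preordered heap is a structure $(P,\le,\mu,\gamma)$ where $(P,\le)$ is a preorder (reflexive and transitive relation); $\mu\colon P\times P\to P$ (source multiplication) is monotonic in both arguments; $\gamma\colon P\to P$ (involution) is antitone ($a\le b\Rightarrow \gamma b\le\gamma a$); and the following axioms hold: (A1) $\gamma(\gamma(a))=a$ for all $a$; (A2a, left regularity) $\mu(a,\gamma(\mu(\gamma b,a)))\le b$ for all $a,b\in P$; (A2b, right regularity) $\mu(\gamma(\mu(a,\gamma b)),a)\le b$ for all $a,b\in P$. For a binary operation $\nu$ and $a\in P$, write $\nu_a(b)=\nu(a,b)$ (left multiplication by $a$) and $\nu^a(b)=\nu(b,a)$ (right multiplication by $a$). Monotone maps $L,R\colon P\to P$ form an adjoint pair $(L,R)$ if $Lb\le c \iff b\le Rc$ for all $b,c$. *)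

(* Defs.v *)
Record PreorderedHeap (P : Type) := {
  le : P -> P -> Prop;
  mu : P -> P -> P;
  gamma : P -> P;
  le_refl : forall a, le a a;
  le_trans : forall a b c, le a b -> le b c -> le a c;
  mu_mono : forall a a' b b', le a a' -> le b b' -> le (mu a b) (mu a' b');
  gamma_antitone : forall a b, le a b -> le (gamma b) (gamma a);
  gamma_invol : forall a, gamma (gamma a) = a;
  left_regular : forall a b, le (mu a (gamma (mu (gamma b) a))) b;
  right_regular : forall a b, le (mu (gamma (mu a (gamma b))) a) b
}.

Arguments le {P} _ _ _.
Arguments mu {P} _ _ _.
Arguments gamma {P} _ _.

Definition tau {P : Type} (H : PreorderedHeap P) (a b : P) : P :=
  gamma H (mu H (gamma H a) (gamma H b)).

Definition adjoint_pair {P : Type} (H : PreorderedHeap P) (L R : P -> P) : Prop :=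
  (forall x y, le H x y -> le H (L x) (L y)) /\
  (forall x y, le H x y -> le H (R x) (R y)) /\
  (forall b c, le H (L b) c <-> le H b (R c)).

(* Main.v *)
Require Import Defs.

Theorem theorem1 (P : Type) (H : PreorderedHeap P) (a : P) :
  adjoint_pair H (fun b => mu H a b) (fun c => tau H c (gamma H a)) /\
  adjoint_pair H (fun b => mu H b a) (fun c => tau H (gamma H a) c).
Proof.
  unfold adjoint_pair, tau.
  pose proof (le_refl P H) as R.
  pose proof (le_trans P H) as T.
  pose proof (mu_mono P H) as M.
  pose proof (gamma_antitone P H) as G.
  pose proof (gamma_invol P H) as I.
  pose proof (left_regular P H) as LR.
  pose proof (right_regular P H) as RR.
  rewrite !I.
  split; (split; [|split; [|split]]).
  - intros x y h; apply M; auto.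
  - intros x y h; apply G, M; auto.
  - intros h. apply T with (gamma H (gamma H b)); [rewrite I; apply R|].
    apply T with (gamma H (mu H (gamma H (mu H a b)) a)).
    + apply G. specialize (RR a (gamma H b)). rewrite I in RR. exact RR.
    + apply G, M; auto.
  - intros h. eapply T; [apply M; [apply R|exact h]|apply LR].
  - intros x y h; apply M; auto.
  - intros x y h; apply G, M; auto.
  - intros h. apply T with (gamma H (gamma H b)); [rewrite I; apply R|].
    apply T with (gamma H (mu H a (gamma H (mu H b a)))).
    + apply G. specialize (LR a (gamma H b)). rewrite I in LR. exact LR.
    + apply G, M; auto.
  - intros h. eapply T; [apply M; [exact h|apply R]|apply RR].
Qed.
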